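(* Let $G=(V,E,w)$ be an edge-weighted graph with positive rational weights and no isolated vertices. The greedy algorithm applied to $U=V$ and the function $h$ returns a WPPIDS $S$ with $|S|\le\big(1+\ln(\delta_{\max}/\delta_{\min})\big)\cdot|S^*|$, where $\delta_{\max}\le\frac32 W$ and $\delta_{\min}\ge 1/L$; in particular $|S|\le\big(1+\ln(\tfrac32\cdot L\cdot W)\big)\cdot|S^*|$, where $S^*$ is a minimum-cardinality WPPIDS.
   Context: $N_A(v)=N(v)\cap A$, $W_A(v)=\sum_{u\in N_A(v)}w_{(v,u)}$, $W(v)=W_V(v)$, $W=\max_{v\in V}W(v)$. $h(A)=\sum_{v\in V}h_A(v)$ with $h_A(v)=W(v)/2$ if $v\in A$ or $W_A(v)\ge W(v)/2$, and $h_A(v)=W_A(v)$ otherwise. For $v$ with incident edge weights $w_1,\dots,w_d$, write $w_0=W(v)/2$ and each $w_i$ as a reduced fraction $p_i/q_i$; $l(v)=\mathrm{lcm}\{q_0,\dots,q_d\}$ and $L=\max_v l(v)$. $\Delta_x h(A)=h(A\cup\{x\})-h(A)$. The greedy algorithm: start with $S=\emptyset$; while some $u\in U\setminus S$ has $\Delta_u h(S)>0$, add to $S$ an element $x\in U\setminus S$ maximizing $\Delta_u h(S)$ (ties arbitrary); return $S$, with chosen elements $s_1,s_2,\dots$ in order, $S_i=\{s_1,\dots,s_i\}$. $\delta_{\max}=\Delta_{s_1}h(\emptyset)$ and $\delta_{\min}=\min_i\Delta_{s_i}h(S_{i-1})$. A WPPIDS is a set $S\subseteq V$ such that every $v\in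 V\setminus S$ satisfies $W_S(v)\ge W(v)/2$. *)

(* Defs.v *)
From HB Require Import structures.
From mathcomp Require Import all_boot all_order all_algebra.
From mathcomp Require Import all_classical all_reals all_analysis.
Set Implicit Arguments. Unset Strict Implicit. Unset Printing Implicit Defensive.
Import Order.TTheory GRing.Theory Num.Theory.
Local Open Scope ring_scope.

Section WPPIDS.
Variables (V : finType) (e : rel V) (w : V -> V -> rat).

Definition WA (A : {set V}) (v : V) : rat := \sum_(u in A | e v u) w v u.
Definition Wv (v : V) : rat := WA [set: V] v.
(* W = max_v W(v) (all W(v) are >= 0 for positive weights) *)
Definition Wmax : rat := \big[Num.max/0]_(v : V) Wv v.

Definition hA (A : {set V}) (v : V) : rat :=
  if (v \in A) || (Wv v / 2%:R <= WA A v) then Wv v / 2%:R else WA A v.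
Definition h (A : {set V}) : rat := \sum_(v : V) hA A v.
Definition Delta (x : V) (A : {set V}) : rat := h (x |: A) - h A.

Definition lv (v : V) : nat :=
  lcmn `|denq (Wv v / 2%:R)|%N (\big[lcmn/1%N]_(u | e v u) `|denq (w v u)|%N).
Definition Lmax : nat := \max_(v : V) lv v.

Definition is_wppids (S : {set V}) : Prop :=
  forall v, v \notin S -> Wv v / 2%:R <= WA S v.

Definition is_min_wppids (S : {set V}) : Prop :=
  is_wppids S /\ forall T, is_wppids T -> (#|S| <= #|T|)%N.

(* s = [:: s_1; ...; s_k] is a possible run (any tie-breaking) of the greedy
   algorithm on U = V with function h *)
Definition greedy_run (s : seq V) : Prop :=
  (forall s1 x s2, s = s1 ++ x :: s2 ->
     let A := [set y in s1] in
     [/\ x \notin A, 0 < Delta x A & forall u, u \notin A -> Delta u A <= Delta x A])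
  /\ (forall u, u \notin [set y in s] -> Delta u [set y in s] <= 0).

Fixpoint gains (A : {set V}) (s : seq V) : seq rat :=
  if s is x :: s' then Delta x A :: gains (x |: A) s' else [::].

Definition delta_max (s : seq V) : rat := head 0 (gains (@finset.set0 V) s).
Definition delta_min (s : seq V) : rat :=
  let g := gains (@finset.set0 V) s in foldr Num.min (head 0 g) g.

End WPPIDS.

(* Main.v *)
Require Import Defs.
From HB Require Import structures.
From mathcomp Require Import all_boot all_order all_algebra.
From mathcomp Require Import all_classical all_reals all_analysis.
From mathcomp Require Import ring lra.
Import Order.TTheory GRing.Theory Num.Theory.
Local Open Scope ring_scope.

Section Real.
Variable R : realType.

Lemma ln_le_sub1 {y : R} : 0 < y -> ln y <= y - 1.
Proof.
move=> y0; have := @le_ln1Dx R (y - 1).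
rewrite (_ : 1 + (y - 1) = y); last by rewrite addrC subrK.
apply; lra.
Qed.

Definition phi (m dm r : R) :=
  if r <= m * dm then r / dm else m * (1 + ln (r / (m * dm))).

Lemma phi_ge0 m dm r : 1 <= m -> 0 < dm -> 0 <= r -> 0 <= phi m dm r.
Proof.
move=> m1 dm0 r0; rewrite /phi; case: ifPn => h.
  by rewrite divr_ge0 // ltW.
rewrite -ltNge in h; apply: mulr_ge0; first lra.
have : 0 <= ln (r / (m * dm)); last lra.
apply: ln_ge0; rewrite ler_pdivlMr; first lra.
apply: mulr_gt0 => //; lra.
Qed.

Lemma phi_step m dm r r' : 1 <= m -> 0 < dm -> 0 <= r' -> r' <= r - dm ->
  m * r' <= (m - 1) * r -> 1 + phi m dm r' <= phi m dm r.
Proof.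
move=> m1 dm0 r'0 hd hm.
have M0 : 0 < m * dm by apply: mulr_gt0 => //; lra.
have idm : dm * dm^-1 = 1 by rewrite divff // gt_eqF.
have idm0 : 0 < dm^-1 by rewrite invr_gt0.
rewrite /phi; case: ifPn => hr'; case: ifPn => hr.
- nra.
- rewrite -ltNge in hr.
  set x := r / (m * dm).
  have x1 : 1 < x by rewrite /x ltr_pdivlMr // mul1r.
  have x0 : 0 < x by lra.
  set z := x^-1.
  have xz : x * z = 1 by rewrite /z divff // gt_eqF.
  have z0 : 0 < z by rewrite invr_gt0.
  have hy : 1 - z <= ln x.
    have := ln_le_sub1 z0; rewrite /z lnV ?posrE //; lra.
  have ru : r' / dm <= m by rewrite ler_pdivrMr.
  have rx : r = x * m * dm by rewrite /x -mulrA divfK // gt_eqF.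
  have ru2 : r' / dm <= (m - 1) * x.
    rewrite ler_pdivrMr //; rewrite rx in hm.
    have : m * r' <= m * ((m - 1) * x * dm) by rewrite (le_trans hm) //; rewrite le_eqVlt; apply/orP; left; apply/eqP; ring.
    by rewrite ler_pM2l //; lra.
  set u := r' / dm in ru ru2 *.
  have h1 : m * (2 - z) <= m * (1 + ln x) by rewrite ler_pM2l; lra.
  have [hc|hc] := lerP ((m - 1) * x) m.
    have h3 : 0 <= (m - (m - 1) * x) * (x - 1) by apply: mulr_ge0; lra.
    have h2 : (m - 1) * x + m * z <= 2 * m - 1.
      rewrite -(ler_pM2l x0).
      have -> : x * ((m - 1) * x + m * z) = (m - 1) * x * x + m * (x * z) by ring.
      rewrite xz; nra.
    nra.
  nra.
- rewrite -ltNge in hr'. have : r' <= r by lra. lra.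
- rewrite -!ltNge in hr' hr.
  have r0 : 0 < r by exact: lt_trans M0 hr.
  have r'0' : 0 < r' by exact: lt_trans M0 hr'.
  have -> : r' / (m * dm) = r / (m * dm) * (r' / r).
    by field; rewrite ?gt_eqF // ?mulf_neq0 ?gt_eqF //; lra.
  rewrite [ln (_ * (r' / r))]lnM ?posrE ?divr_gt0 //.
  set q := r' / r.
  have hq : ln q <= q - 1 by apply: ln_le_sub1; rewrite divr_gt0.
  have qr : q * r = r' by rewrite /q divfK // gt_eqF.
  have : m * q <= m - 1.
    rewrite -(ler_pM2r r0) -mulrA qr; lra.
  have : m * ln q <= m * (q - 1) by rewrite ler_pM2l //; lra.
  move=> h1 h2.
  set a := ln (r / (m * dm)).
  have -> : m * (1 + (a + ln q)) = m * (1 + a) + m * ln q by ring.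
  lra.
Qed.

Lemma phi_final m dm D r : 1 <= m -> 0 < dm -> dm <= D -> 0 <= r -> r <= m * D ->
  phi m dm r <= m * (1 + ln (D / dm)).
Proof.
move=> m1 dm0 dD r0 rD.
have M0 : 0 < m * dm by apply: mulr_gt0 => //; lra.
have l0 : 0 <= ln (D / dm) by apply: ln_ge0; rewrite ler_pdivlMr // mul1r.
rewrite /phi; case: ifPn => hr.
  rewrite ler_pdivrMr //; nra.
rewrite -ltNge in hr.
rewrite ler_pM2l; last lra.
rewrite lerD2l ler_ln ?posrE ?divr_gt0 //; try lra.
  rewrite ler_pdivrMr //.
  have -> : D / dm * (m * dm) = m * D by field; rewrite gt_eqF.
  by [].
Qed.
End Real.
Lemma min_mono (c y y' : rat) : y <= y' -> Num.min c y <= Num.min c y'.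
Proof. by move=> h; rewrite !minElt; do 2?[case: ltP => ?]; lra. Qed.

Lemma min_le_r (c y : rat) : Num.min c y <= y.
Proof. by rewrite !minElt; do 1?[case: ltP => ?]; lra. Qed.

Lemma min_sub (c y y' a a' : rat) : 0 <= a' -> a' <= a -> y <= y' ->
  Num.min c (y' + a') - Num.min c y' <= Num.min c (y + a) - Num.min c y.
Proof. by move=> *; rewrite !minElt; do 4?[case: ltP => ?]; lra. Qed.

Section Comb.
Variables (V : finType) (e : rel V) (w : V -> V -> rat).
Hypotheses (e_sym : symmetric e) (e_irr : irreflexive e)
  (w_sym : forall u v, w u v = w v u)
  (w_pos : forall u v, e u v -> 0 < w u v).

Implicit Types (A B S : {set V}) (v x u y : V) (t : seq V).

Lemma wpos {u v} : e u v -> 0 < w u v. Proof. exact: w_pos. Qed.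

Definition cv v := Wv e w v / 2%:R.
Definition gA A v := WA e w A v + (v \in A)%:R * cv v.

Lemma WA_ge0 A v : 0 <= WA e w A v.
Proof. by apply: sumr_ge0 => u /andP[_ hu]; exact: ltW (wpos hu). Qed.

Lemma cv_ge0 v : 0 <= cv v.
Proof. by rewrite /cv divr_ge0 // WA_ge0. Qed.

Lemma WA_mono A B v : A \subset B -> WA e w A v <= WA e w B v.
Proof.
move=> sAB; rewrite /WA [X in X <= _]big_mkcond [X in _ <= X]big_mkcond /=.
apply: ler_sum => u _.
case hA: (u \in A); case hB: (u \in B); case he: (e v u) => //=;
  rewrite ?lexx ?(ltW (wpos he)) //.
by have := fintype.subsetP sAB u hA; rewrite hB.
Qed.

Lemma WA_U1 x A v : WA e w (x |: A) v =
  WA e w A v + (if (x \notin A) && e v x then w v x else 0).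
Proof.
case: (boolP (x \in A)) => hx /=.
  have -> : x |: A = A by apply/finset.setUidPr; rewrite finset.sub1set.
  by rewrite addr0.
by rewrite /WA !big_mkcondr /= big_setU1 //= addrC.
Qed.

Lemma hAE A v : hA e w A v = Num.min (cv v) (gA A v).
Proof.
rewrite /hA /gA /cv; case: (boolP (v \in A)) => hv /=.
  rewrite mul1r minElt; case: ltP => // h; have := WA_ge0 A v => h'.
  by apply/eqP; rewrite eq_le; apply/andP; split; lra.
rewrite mul0r addr0 minElt; case: ltP => h; case: leP => h' //;
  by apply/eqP; rewrite eq_le; apply/andP; split; lra.
Qed.

Lemma gA_U1 x A v : gA (x |: A) v = gA A v +
  (if x \in A then 0 else (if e v x then w v x else 0) + (x == v)%:R * cv v).
Proof.
rewrite /gA WA_U1 finset.in_setU1.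
case: (eqVneq v x) => [->|hne] /=; rewrite ?eqxx.
  by case hx: (x \in A) => /=; ring.
rewrite ?(eq_sym x v) ?(negbTE hne) /=.
by case hx: (x \in A) => /=; ring.
Qed.

Lemma gA_mono A B v : A \subset B -> gA A v <= gA B v.
Proof.
move=> sAB; rewrite /gA; apply: lerD; first exact: WA_mono.
have := cv_ge0 v; case hA: (v \in A); case hB: (v \in B) => /= h; try lra.
by have := fintype.subsetP sAB v hA; rewrite hB.
Qed.

Lemma hA_mono A B v : A \subset B -> hA e w A v <= hA e w B v.
Proof. by move=> sAB; rewrite !hAE; apply: min_mono; apply: gA_mono. Qed.

Lemma hA_submod x A B v : A \subset B ->
  hA e w (x |: B) v - hA e w B v <= hA e w (x |: A) v - hA e w A v.
Proof.
move=> sAB; rewrite !hAE !gA_U1.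
set a0 := (if e v x then w v x else 0) + (x == v)%:R * cv v.
have a00 : 0 <= a0.
  rewrite /a0; apply: addr_ge0; first by case he: (e v x) => //; exact: ltW (wpos he).
  by apply: mulr_ge0 => //; exact: cv_ge0.
case: (boolP (x \in B)) => hB.
  rewrite addr0 subrr subr_ge0; apply: min_mono.
  by case: (x \in A); lra.
have hA : x \notin A by apply: contra hB; apply: (fintype.subsetP sAB).
rewrite (negbTE hA); apply: min_sub => //; exact: gA_mono.
Qed.

Lemma h_mono A B : A \subset B -> h e w A <= h e w B.
Proof. by move=> sAB; apply: ler_sum => v _; exact: hA_mono. Qed.

Lemma DeltaE x A : Delta e w x A = \sum_v (hA e w (x |: A) v - hA e w A v).
Proof. by rewrite /Delta /h sumrB. Qed.

Lemma Delta_submod x A B : A \subset B -> Delta e w x B <= Delta e w x A.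
Proof. by move=> sAB; rewrite !DeltaE; apply: ler_sum => v _; exact: hA_submod. Qed.

Lemma Delta_ge0 x A : 0 <= Delta e w x A.
Proof. by rewrite /Delta subr_ge0; apply: h_mono; exact: finset.subsetU1. Qed.

Lemma Delta_ge_v x A v : hA e w (x |: A) v - hA e w A v <= Delta e w x A.
Proof.
rewrite DeltaE (bigD1 v) //= lerDl; apply: sumr_ge0 => u _.
by rewrite subr_ge0; apply: hA_mono; exact: finset.subsetU1.
Qed.

Lemma Delta_in x A : x \in A -> Delta e w x A = 0.
Proof.
move=> hx; rewrite /Delta.
have -> : x |: A = A by apply/finset.setUidPr; rewrite finset.sub1set.
by rewrite subrr.
Qed.

Lemma h_le_top A : h e w A <= h e w [set: V].
Proof. by apply: h_mono; exact: finset.subsetT. Qed.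

Lemma h_wppids S : is_wppids e w S -> h e w S = h e w [set: V].
Proof.
move=> hS; apply: eq_bigr => v _; rewrite /hA finset.in_setT /=.
case: (boolP (v \in S)) => //= hv; by rewrite hS.
Qed.

Lemma sum_bound A (t : seq V) :
  h e w (A :|: [set y in t]) - h e w A <= \sum_(y <- t) Delta e w y A.
Proof.
elim: t => [|y t IH].
  have -> : [set y in [::]] = finset.set0 :> {set V} by apply/finset.setP => y; rewrite !inE.
  by rewrite finset.setU0 subrr big_nil.
have -> : [set z in y :: t] = y |: [set z in t] by apply/finset.setP => z; rewrite !inE.
rewrite big_cons finset.setUCA.
have := @Delta_submod y _ _ (finset.subsetUl A [set z in t]).
rewrite /Delta; lra.
Qed.


Definition isint (l : nat) (q : rat) := exists z : int, q * l%:R = z%:~R.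

Lemma int_dvd (q : rat) (n : nat) : (`|denq q| %| n)%N -> isint n q.
Proof.
case/dvdnP => k ->; exists (numq q * k%:Z).
rewrite natrM rmorphM /= numqE natr_absz gtr0_norm ?denq_gt0 //.
have -> : ((Posz k)%:~R : rat) = k%:R by [].
by ring.
Qed.

Lemma isint0 l : isint l 0.
Proof. by exists 0; rewrite mul0r. Qed.

Lemma isintD l a b : isint l a -> isint l b -> isint l (a + b).
Proof. by move=> [x hx] [y hy]; exists (x + y); rewrite mulrDl hx hy rmorphD. Qed.

Lemma isintB l a b : isint l a -> isint l b -> isint l (a - b).
Proof. by move=> [x hx] [y hy]; exists (x - y); rewrite mulrBl hx hy rmorphB. Qed.

Lemma hA_int A v : isint (lv e w v) (hA e w A v).
Proof.
rewrite /hA; case: ifP => _.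
  by apply: int_dvd; rewrite /lv dvdn_lcml.
rewrite /WA; elim/big_ind: _ => //; first exact: isint0.
  by move=> a b; apply: isintD.
move=> u /andP[_ hu]; apply: int_dvd; rewrite /lv.
apply: dvdn_trans (dvdn_lcmr _ _).
have := dvdnn (\big[lcmn/1%N]_(u0 | e v u0) `|denq (w v u0)|%N).
by move/dvdn_biglcmP; apply.
Qed.

Lemma lv_gt0 v : (0 < lv e w v)%N.
Proof.
rewrite /lv lcmn_gt0 absz_gt0 denq_neq0 /=.
elim/big_ind: _ => //; first by move=> a b ha hb; rewrite lcmn_gt0 ha hb.
by move=> u _; rewrite absz_gt0 denq_neq0.
Qed.

Lemma lv_le v : (lv e w v <= Lmax e w)%N.
Proof. by rewrite /Lmax; apply: (@bigop.leq_bigmax _ (fun v => lv e w v)). Qed.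

Lemma Lmax_gt0 v : (0 < Lmax e w)%N.
Proof. exact: leq_trans (lv_gt0 v) (lv_le v). Qed.

Lemma gain_ge_L x A : 0 < Delta e w x A -> 1 / (Lmax e w)%:R <= Delta e w x A.
Proof.
move=> hpos.
pose d v := hA e w (x |: A) v - hA e w A v.
have [v hv] : exists v, 0 < d v.
  case: (boolP [exists v, 0 < d v]) => [/existsP[v hv]|/existsPn hn]; first by exists v.
  exfalso; move: hpos; rewrite DeltaE.
  have : \sum_v d v <= 0 by apply: sumr_le0 => v _; rewrite leNgt hn.
  rewrite /d; lra.
apply: le_trans (Delta_ge_v x A v); rewrite -/(d v).
have [z hz] : isint (lv e w v) (d v) by apply: isintB; apply: hA_int.
have l0 : (0 : rat) < (lv e w v)%:R by rewrite ltr0n lv_gt0.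
have z1 : 1 <= (z%:~R : rat).
  have : (0 : rat) < z%:~R by rewrite -hz mulr_gt0.
  by rewrite ltr0z ler1z.
have L0 : (0 : rat) < (Lmax e w)%:R by rewrite ltr0n (Lmax_gt0 v).
have hlL : ((lv e w v)%:R : rat) <= (Lmax e w)%:R by rewrite ler_nat lv_le.
rewrite ler_pdivrMr // (le_trans _ (ler_wpM2l (ltW hv) hlL)) //.
by rewrite hz.
Qed.


Lemma le_Wmax x : Wv e w x <= Wmax e w.
Proof.
rewrite /Wmax; have : x \in index_enum V by rewrite mem_index_enum.
elim: (index_enum V) => // y r IH.
rewrite inE big_cons => /orP[/eqP->|/IH hr]; rewrite le_max ?lexx //.
by rewrite hr orbT.
Qed.

Lemma Wv_gt0 v : (exists u, e v u) -> 0 < Wv e w v.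
Proof.
move=> [u hu]; rewrite /Wv /WA (bigD1 u) /=; last by rewrite finset.in_setT hu.
apply: (lt_le_trans (wpos hu)); rewrite lerDl; apply: sumr_ge0 => y /andP[/andP[_ hy] _].
exact: ltW (wpos hy).
Qed.

Lemma gA0 v : gA finset.set0 v = 0.
Proof. by rewrite /gA /WA big_mkcondr finset.big_set0 finset.in_set0 mul0r addr0. Qed.

Lemma hA_ge0 A v : 0 <= hA e w A v.
Proof.
rewrite hAE /gA minElt; have := cv_ge0 v; have := WA_ge0 A v.
by case: (v \in A) => /=; case: ltP => ? ? ?; lra.
Qed.

Lemma h_ge0 A : 0 <= h e w A.
Proof. by apply: sumr_ge0 => v _; exact: hA_ge0. Qed.

Lemma Delta_empty_le x : Delta e w x finset.set0 <= 3%:R / 2%:R * Wv e w x.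
Proof.
have h0 := h_ge0 finset.set0.
have : h e w (x |: finset.set0) <= Wv e w x + cv x.
  apply: le_trans (_ : \sum_v gA (x |: finset.set0) v <= _).
    by apply: ler_sum => v _; rewrite hAE; exact: min_le_r.
  under eq_bigr => v _ do rewrite gA_U1 gA0 finset.in_set0 /= add0r.
  rewrite big_split /=.
  have -> : \sum_v (if e v x then w v x else 0) = Wv e w x.
    rewrite /Wv /WA [RHS]big_mkcond /=; apply: eq_bigr => v _.
    by rewrite finset.in_setT /= (e_sym x v) (w_sym x v).
  have -> : \sum_v (x == v)%:R * cv v = cv x.
    rewrite (bigD1 x) //= eqxx mul1r big1 ?addr0 // => v hv.
    by rewrite eq_sym (negbTE hv) mul0r.
  by [].
rewrite /Delta /cv => hx; lra.
Qed.


Lemma key_bound Sstar A x : is_wppids e w Sstar -> 0 <= Delta e w x A ->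
  (forall u, u \notin A -> Delta e w u A <= Delta e w x A) ->
  h e w [set: V] - h e w A <= #|Sstar|%:R * Delta e w x A.
Proof.
move=> hS h0 hmax; rewrite -(@h_wppids Sstar hS).
have eS : [set y in enum Sstar] = Sstar by apply/finset.setP => y; rewrite inE mem_enum.
have h1 : h e w Sstar <= h e w (A :|: [set y in enum Sstar]).
  by apply: h_mono; rewrite eS finset.subsetUr.
have h2 := sum_bound A (enum Sstar).
have h3 : \sum_(y <- enum Sstar) Delta e w y A <= #|Sstar|%:R * Delta e w x A.
  rewrite big_enum /= mulr_natl -sumr_const /=.
  apply: ler_sum => y _; case: (boolP (y \in A)) => hy; last exact: hmax.
  by rewrite Delta_in.
lra.
Qed.

Lemma set_nil : [set y in [::]] = finset.set0 :> {set V}.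
Proof. by apply/finset.setP => y; rewrite !inE. Qed.

Lemma set_cons y t : [set z in y :: t] = y |: [set z in t].
Proof. by apply/finset.setP => z; rewrite !inE. Qed.

Lemma gains_mem A t g : g \in gains e w A t ->
  exists t1 x t2, t = t1 ++ x :: t2 /\ g = Delta e w x (A :|: [set y in t1]).
Proof.
elim: t A => [|y t IH] A //=.
rewrite inE => /orP[/eqP->|/IH [t1 [x [t2 [-> ->]]]]].
  by exists [::], y, t; rewrite set_nil finset.setU0.
exists (y :: t1), x, t2; split => //.
by rewrite set_cons finset.setUCA finset.setUA.
Qed.

Lemma uniq_of (s : seq V) : (forall s1 x s2, s = s1 ++ x :: s2 -> x \notin s1) -> uniq s.
Proof.
elim/last_ind: s => // s x IH H.
rewrite rcons_uniq (H s x [::]) ?cats1 //=.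
apply: IH => s1 x' s2 hs; apply: (H s1 x' (rcons s2 x)).
by rewrite hs rcons_cat.
Qed.

End Comb.

Lemma foldr_min_le (a : rat) g y : y \in g -> foldr Num.min a g <= y.
Proof.
elim: g => // z g IH; rewrite inE /= ge_min => /orP[/eqP->|/IH ->]; last by rewrite orbT.
by rewrite lexx.
Qed.

Lemma foldr_min_mem (a : rat) g : foldr Num.min a g \in a :: g.
Proof.
elim: g => [|z g IH] /=; first by rewrite inE.
rewrite minElt; case: ltP => _; first by rewrite !inE eqxx orbT.
move: IH; rewrite !inE => /orP[->|->] //; by rewrite !orbT.
Qed.

Lemma run_size (R : realType) (V : finType) (e : rel V) (w : V -> V -> rat)
  (w_pos : forall u v, e u v -> 0 < w u v)
  (m : nat) (dm : rat) (t : seq V) (A : {set V}) :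
  (1 <= m)%N -> 0 < dm ->
  (forall A x, 0 < Delta e w x A ->
     (forall u, u \notin A -> Delta e w u A <= Delta e w x A) ->
     h e w [set: V] - h e w A <= m%:R * Delta e w x A) ->
  (forall t1 x t2, t = t1 ++ x :: t2 ->
     [/\ x \notin A :|: [set y in t1], 0 < Delta e w x (A :|: [set y in t1])
       & forall u, u \notin A :|: [set y in t1] ->
           Delta e w u (A :|: [set y in t1]) <= Delta e w x (A :|: [set y in t1])]) ->
  (forall g, g \in gains e w A t -> dm <= g) ->
  ((size t)%:R : R) <= @phi R m%:R (ratr dm) (ratr (h e w [set: V] - h e w A)).
Proof.
move=> m1 dm0 Hk; elim: t A => [|x t IH] A Ht Hg /=.
  apply: phi_ge0; first by rewrite ler1n.
    by rewrite ltr0q.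
  by rewrite ler0q subr_ge0; exact: (@h_le_top _ _ _ w_pos).
have [hxA hpos hmax] := Ht [::] x t erefl.
rewrite set_nil finset.setU0 in hxA hpos hmax.
have hd : dm <= Delta e w x A by apply: Hg; rewrite inE eqxx.
have hk := Hk A x hpos hmax.
have IH' := IH (x |: A).
have {IH'} IH' : ((size t)%:R : R) <=
    @phi R m%:R (ratr dm) (ratr (h e w [set: V] - h e w (x |: A))).
  apply: IH'.
    move=> t1 x' t2 ht.
    have := Ht (x :: t1) x' t2; rewrite ht set_cons => /(_ erefl).
    by rewrite finset.setUCA finset.setUA.
  by move=> g hg; apply: Hg; rewrite inE hg orbT.
rewrite -addn1 natrD addrC.
apply: le_trans (_ : 1 + @phi R m%:R (ratr dm) (ratr (h e w [set: V] - h e w (x |: A))) <= _).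
  by rewrite lerD2l.
have htop := @h_le_top _ _ _ w_pos (x |: A).
rewrite /Delta in hd hk.
apply: phi_step.
- by rewrite ler1n.
- by rewrite ltr0q.
- by rewrite ler0q subr_ge0.
- by rewrite -rmorphB ler_rat; lra.
have H : (m%:R * (h e w [set: V] - h e w (x |: A)) <= (m%:R - 1) * (h e w [set: V] - h e w A) :> rat).
  set T := h e w [set: V]; set a := h e w A; set b := h e w (x |: A).
  have ee : (m%:R - 1) * (T - a) - m%:R * (T - b) = m%:R * (b - a) - (T - a) by ring.
  rewrite -subr_ge0 ee subr_ge0; exact: hk.
rewrite -(ler_rat R) in H.
have e1 : (m%:R - 1 : R) = ratr (m%:R - 1 : rat) by rewrite rmorphB rmorph1 rmorph_nat.
rewrite e1.
have e2 : (m%:R : R) = ratr (m%:R : rat) by rewrite rmorph_nat.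
by rewrite e2 -!rmorphM.
Qed.


Theorem mainTheorem14 (R : realType) (V : finType) (e : rel V) (w : V -> V -> rat)
  (e_sym : symmetric e) (e_irr : irreflexive e)
  (w_sym : forall u v, w u v = w v u)
  (w_pos : forall u v, e u v -> 0 < w u v)
  (V_nonempty : (0 < #|V|)%N)
  (no_isolated : forall v : V, exists u, e v u)
  (s : seq V) (Hrun : greedy_run e w s)
  (Sstar : {set V}) (Hstar : is_min_wppids e w Sstar) :
  let S := [set x in s] in
  [/\ is_wppids e w S,
      (#|S|%:R : R) <= (1 + ln (ratr (delta_max e w s / delta_min e w s) : R)) * #|Sstar|%:R,
      delta_max e w s <= 3%:R / 2%:R * Wmax e w,
      1 / (Lmax e w)%:R <= delta_min e w s
    & (#|S|%:R : R) <= (1 + ln (3%:R / 2%:R * (Lmax e w)%:R * ratr (Wmax e w) : R)) * #|Sstar|%:R].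
Proof.
move=> S; case: Hrun => Hg Hterm; case: Hstar => HS _.
have cpos v : 0 < Wv e w v / 2%:R.
  by rewrite divr_gt0 // (@Wv_gt0 _ _ _ w_pos v (no_isolated v)).
have [u0 _] : exists u0 : V, u0 \in predT by apply/card_gt0P.
have HSw : is_wppids e w S.
  move=> v hv; rewrite leNgt; apply/negP => hlt.
  have := Hterm v hv; have := @Delta_ge_v _ _ _ w_pos v S v.
  have -> : hA e w (v |: S) v = Wv e w v / 2%:R by rewrite /hA finset.setU11.
  have -> : hA e w S v = WA e w S v by rewrite /hA (negbTE hv) /= leNgt hlt.
  lra.
have us : uniq s.
  apply: uniq_of => s1 x s2 hs; have [hx _ _] := Hg s1 x s2 hs.
  by move: hx; rewrite inE.
have cardS : #|S| = size s by rewrite /S cardsE; apply/card_uniqP.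
have WA0 v : WA e w finset.set0 v = 0 by rewrite /WA big_mkcondr finset.big_set0.
have hs0 : s <> [::].
  move=> E; have := Hterm u0; rewrite E set_nil finset.in_set0 => /(_ isT).
  have := @Delta_ge_v _ _ _ w_pos u0 finset.set0 u0.
  have -> : hA e w (u0 |: finset.set0) u0 = Wv e w u0 / 2%:R by rewrite /hA finset.setU11.
  have -> : hA e w finset.set0 u0 = 0.
    by rewrite /hA finset.in_set0 WA0 /= leNgt cpos.
  have := cpos u0; lra.
case Es : s hs0 => [//|x1 s'] _.
have Hgain g : g \in gains e w finset.set0 s -> 0 < g /\ 1 / (Lmax e w)%:R <= g.
  move/gains_mem => [t1 [x [t2 [ht ->]]]]; have [_ hp _] := Hg t1 x t2 ht.
  by rewrite finset.set0U; split => //; exact: (@gain_ge_L _ _ _ w_pos x _ hp).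
set dmin := delta_min e w s.
set dmax := delta_max e w s.
have dmin_mem : dmin \in gains e w finset.set0 s.
  have := foldr_min_mem (head 0 (gains e w finset.set0 s)) (gains e w finset.set0 s).
  rewrite -/(delta_min e w s) -/dmin inE => /orP[/eqP->|//].
  by rewrite Es /= inE eqxx.
have dmin_le g : g \in gains e w finset.set0 s -> dmin <= g.
  by move=> hg; exact: foldr_min_le.
have [dmin_pos dmin_L] := Hgain _ dmin_mem.
have dmaxE : dmax = Delta e w x1 finset.set0 by rewrite /dmax /delta_max Es.
have dmax_mem : dmax \in gains e w finset.set0 s by rewrite dmaxE Es /= inE eqxx.
have dmin_max : dmin <= dmax by apply: dmin_le.
have [_ hp0 hm0] : [/\ x1 \notin finset.set0, 0 < Delta e w x1 finset.set0
    & forall u, u \notin finset.set0 -> Delta e w u finset.set0 <= Delta e w x1 finset.set0].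
  by have := Hg [::] x1 s' Es; rewrite set_nil.
have m1 : (1 <= #|Sstar|)%N.
  rewrite lt0n; apply/eqP => /cards0_eq E0.
  have := HS u0; rewrite E0 finset.in_set0 WA0 => /(_ isT).
  have := cpos u0; lra.
have Hk : forall A x, 0 < Delta e w x A ->
     (forall u, u \notin A -> Delta e w u A <= Delta e w x A) ->
     h e w [set: V] - h e w A <= #|Sstar|%:R * Delta e w x A.
  by move=> A x hp hm; apply: (@key_bound _ _ _ w_pos) => //; exact: ltW.
have Hrun : ((size s)%:R : R) <=
    @phi R #|Sstar|%:R (ratr dmin) (ratr (h e w [set: V] - h e w finset.set0)).
  apply: (@run_size R _ _ _ w_pos) => //.
  move=> t1 x t2 ht; rewrite finset.set0U; exact: (Hg t1 x t2 ht).
have hT0 : h e w [set: V] - h e w finset.set0 <= #|Sstar|%:R * dmax.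
  by rewrite dmaxE; apply: Hk.
have Hmain : ((size s)%:R : R) <= #|Sstar|%:R * (1 + ln (ratr dmax / ratr dmin)).
  apply: le_trans Hrun _; apply: phi_final.
  - by rewrite ler1n.
  - by rewrite ltr0q.
  - by rewrite ler_rat.
  - by rewrite ler0q subr_ge0; exact: (@h_le_top _ _ _ w_pos).
  - by rewrite -(rmorph_nat (ratr : {rmorphism rat -> R})) -rmorphM ler_rat.
rewrite -Es -/dmin -/dmax.
have dmax3 : dmax <= 3%:R / 2%:R * Wmax e w.
  rewrite dmaxE; apply: le_trans (@Delta_empty_le _ _ _ e_sym w_sym w_pos x1) _.
  by rewrite ler_wpM2l // (@le_Wmax _ e w x1).
have H2 : (#|S|%:R : R) <= (1 + ln (ratr (dmax / dmin) : R)) * #|Sstar|%:R.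
  by rewrite cardS mulrC fmorph_div.
split => //.
apply: le_trans H2 _; rewrite ler_wpM2r // lerD2l.
have W0 : 0 < Wmax e w.
  exact: lt_le_trans (@Wv_gt0 _ _ _ w_pos x1 (no_isolated x1)) (@le_Wmax _ e w x1).
have L0 : (0 : rat) < (Lmax e w)%:R by rewrite ltr0n (@Lmax_gt0 _ e w x1).
have dmax0 : 0 < dmax by apply: lt_le_trans dmin_max.
have Hq : dmax / dmin <= 3%:R / 2%:R * (Lmax e w)%:R * Wmax e w.
  rewrite ler_pdivrMr //.
  have h1 : 1 <= dmin * (Lmax e w)%:R by rewrite -ler_pdivrMr.
  have W0' : 0 <= 3%:R / 2%:R * Wmax e w by apply: mulr_ge0 => //; exact: ltW.
  have := ler_wpM2l W0' h1; rewrite mulr1 => h2.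
  apply: le_trans dmax3 _; apply: le_trans h2 _.
  by rewrite le_eqVlt; apply/orP; left; apply/eqP; ring.
rewrite ler_ln ?posrE.
- rewrite -(ler_rat R) in Hq; apply: le_trans Hq _.
  by rewrite !rmorphM fmorphV !rmorph_nat.
- by rewrite ltr0q divr_gt0.
- by apply: mulr_gt0; [apply: mulr_gt0 => //; rewrite ltr0n (@Lmax_gt0 _ e w x1) | rewrite ltr0q].
Qed.
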